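(* Let $L$ be a completely regular frame. Then $\overline{\mathrm{H}}(L)$ (with the inclusion $\overline{\mathrm{C}}(L)\subseteq\overline{\mathrm{H}}(L)$) is the Dedekind–MacNeille completion of $\overline{\mathrm{C}}(L)$.
   Context: $\mathbb{Q}$ is the rationals; $a^\ast$ is the pseudocomplement. The frame $\mathfrak{L}(\overline{\mathbb{IR}})$ is presented by generators $(r,\textsf{---})$, $(\textsf{---},s)$ ($r,s\in\mathbb{Q}$) subject to (r1) $(r,\textsf{---})\wedge(\textsf{---},s)=0$ whenever $r\ge s$; (r3) $(r,\textsf{---})=\bigvee_{s>r}(s,\textsf{---})$; (r4) $(\textsf{---},s)=\bigvee_{r<s}(\textsf{---},r)$. $\overline{\mathrm{IC}}(L)$ is the set of frame homomorphisms $\mathfrak{L}(\overline{\mathbb{IR}})\to L$, ordered by $f\le g$ iff $f(r,\textsf{---})\le g(r,\textsf{---})$ and $g(\textsf{---},s)\le f(\textsf{---},s)$ for all $r,s$. $\overline{\mathrm{C}}(L)$ (extended continuous real functions) is the subposet of those $f$ with $f(r,\textsf{---})\vee f(\textsf{---},s)=1$ whenever $r<s$ (equivalently, homomorphisms from the frame of extended reals). $\overline{\mathrm{H}}(L)$ is the subposet of $f\in\overline{\mathrm{IC}}(L)$ with $f(r,\textsf{---})^\ast\le f(\textsf{---},s)$ and $f(\textsf{---},s)^\ast\le f(r,\textsf{---})$ for all $r<s$. A Dedekind–MacNeille completion of a poset $P$ is a join- and meet-dense order embedding of $P$ into a complete lattice. A frame is completely regular if every $a$ is the join of the elements completely below it.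 *)

(* Defs.v *)
From mathcomp Require Import all_boot all_order all_algebra.
Set Implicit Arguments.
Unset Strict Implicit.
Unset Printing Implicit Defensive.
Import Order.TTheory GRing.Theory Num.Theory.

Record frame := Frame {
  fcarrier :> Type;
  fle : fcarrier -> fcarrier -> Prop;
  fjoin : (fcarrier -> Prop) -> fcarrier;
  fmeet : fcarrier -> fcarrier -> fcarrier;
  ftop : fcarrier;
  fbot : fcarrier;
  fle_refl : forall a, fle a a;
  fle_trans : forall a b c, fle a b -> fle b c -> fle a c;
  fle_antisym : forall a b, fle a b -> fle b a -> a = b;
  fjoin_ub : forall (S : fcarrier -> Prop) a, S a -> fle a (fjoin S);
  fjoin_least : forall (S : fcarrier -> Prop) b,
      (forall a, S a -> fle a b) -> fle (fjoin S) b;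
  fmeet_lb_l : forall a b, fle (fmeet a b) a;
  fmeet_lb_r : forall a b, fle (fmeet a b) b;
  fmeet_glb : forall a b c, fle c a -> fle c b -> fle c (fmeet a b);
  ftop_max : forall a, fle a ftop;
  fbot_min : forall a, fle fbot a;
  fdistr : forall a (S : fcarrier -> Prop),
      fmeet a (fjoin S) = fjoin (fun x => exists2 s, S s & x = fmeet a s)
}.

Section FrameOps.
Variable L : frame.

Definition fjoin2 (a b : L) : L := fjoin (fun x => x = a \/ x = b).

Definition pcompl (a : L) : L := fjoin (fun x => fmeet x a = fbot L).

Definition rather_below (a b : L) : Prop := fjoin2 (pcompl a) b = ftop L.

Definition completely_below (a b : L) : Prop :=
  exists c : rat -> L, c 0%R = a /\ c 1%R = b /\
    (forall p q : rat, (0 <= p)%R -> (p < q)%R -> (q <= 1)%R ->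
       rather_below (c p) (c q)).

Definition completely_regular : Prop :=
  forall a : L, a = fjoin (fun b => completely_below b a).

(** * IC-bar(L): frame homomorphisms L(IR-bar) -> L, given (by the universal
    property of the presentation) by their values on the generators
    (r,-) ↦ lo r and (-,s) ↦ up s, subject to the relations (r1),(r3),(r4). *)
Record ICbar := MkICbar {
  lo : rat -> L;
  up : rat -> L;
  ic_r1 : forall r s : rat, (s <= r)%R -> fmeet (lo r) (up s) = fbot L;
  ic_r3 : forall r : rat, lo r = fjoin (fun x => exists2 s : rat, (r < s)%R & x = lo s);
  ic_r4 : forall s : rat, up s = fjoin (fun x => exists2 r : rat, (r < s)%R & x = up r)
}.

Definition ICle (f g : ICbar) : Prop :=
  (forall r, fle (lo f r) (lo g r)) /\ (forall s, fle (up g s) (up f s)).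

Definition inCbar (f : ICbar) : Prop :=
  forall r s : rat, (r < s)%R -> fjoin2 (lo f r) (up f s) = ftop L.

Definition inHbar (f : ICbar) : Prop :=
  forall r s : rat, (r < s)%R ->
    fle (pcompl (lo f r)) (up f s) /\ fle (pcompl (up f s)) (lo f r).

End FrameOps.

Section DM.
Variables (T : Type) (le : T -> T -> Prop).

Definition is_lub_in (Q S : T -> Prop) (x : T) : Prop :=
  Q x /\ (forall y, S y -> le y x) /\
  (forall z, Q z -> (forall y, S y -> le y z) -> le x z).

Definition is_glb_in (Q S : T -> Prop) (x : T) : Prop :=
  Q x /\ (forall y, S y -> le x y) /\
  (forall z, Q z -> (forall y, S y -> le z y) -> le z x).

Definition complete_lattice_on (Q : T -> Prop) : Prop :=
  forall S : T -> Prop, (forall y, S y -> Q y) -> exists x, is_lub_in Q S x.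

(** Q (with the inclusion of P into Q, an order embedding since both carry
    the restriction of le) is the Dedekind–MacNeille completion of P:
    Q is a complete lattice, P ⊆ Q, and P is join- and meet-dense in Q. *)
Definition is_DM_completion (P Q : T -> Prop) : Prop :=
  (forall x, P x -> Q x) /\
  complete_lattice_on Q /\
  (forall x, Q x -> is_lub_in Q (fun y => P y /\ le y x) x) /\
  (forall x, Q x -> is_glb_in Q (fun y => P y /\ le x y) x).
End DM.

(* Main.v *)
Require Import Defs.
From mathcomp Require Import all_boot all_order all_algebra.
From mathcomp Require Import lra.
Import Order.TTheory GRing.Theory Num.Theory.

Section Aux.
Local Open Scope ring_scope.

Lemma mid_btw (r s : rat) : r < s -> exists m : rat, r < m /\ m < s.
Proof. move=> h; exists ((r + s) / 2); split; lra. Qed.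

Arguments mid_btw {r s}.

Definition psi (m t : rat) : rat := 1 - (1 + m - t)^-1.

Lemma psi_bounds m t : t < m -> 0 < psi m t /\ psi m t < 1.
Proof.
move=> h; rewrite /psi; have d1 : 1 < 1 + m - t by lra.
have dp : 0 < 1 + m - t by lra.
have : (1 + m - t)^-1 < 1 by rewrite invf_lt1.
have : 0 < (1 + m - t)^-1 by rewrite invr_gt0.
lra.
Qed.

Lemma psi_mono m p q : p < q -> q < m -> psi m q < psi m p.
Proof.
move=> hpq hq; rewrite /psi.
have : (1 + m - p)^-1 < (1 + m - q)^-1.
  rewrite ltf_pV2 ?posrE; lra.
lra.
Qed.

Arguments psi_bounds {m t}.
Arguments psi_mono {m p q}.

Variable L : frame.

Notation le := (@fle L).
Notation bot := (fbot L).
Notation top := (ftop L).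

Lemma le_antis (a b : L) : le a b -> le b a -> a = b.
Proof. exact: fle_antisym. Qed.

Lemma le_bot (x : L) : le x bot -> x = bot.
Proof. move=> h; apply: le_antis => //; exact: fbot_min. Qed.

Lemma meet_mono (a b c d : L) : le a b -> le c d -> le (fmeet a c) (fmeet b d).
Proof.
move=> h1 h2; apply: fmeet_glb.
  exact: fle_trans (fmeet_lb_l _ _) h1.
exact: fle_trans (fmeet_lb_r _ _) h2.
Qed.

Lemma meet_comm (a b : L) : fmeet a b = fmeet b a.
Proof. by apply: le_antis; apply: fmeet_glb; [exact: fmeet_lb_r|exact: fmeet_lb_l|exact: fmeet_lb_r|exact: fmeet_lb_l]. Qed.

Lemma meet_top (z : L) : fmeet z top = z.
Proof. apply: le_antis; first exact: fmeet_lb_l. apply: fmeet_glb; [exact: fle_refl|exact: ftop_max]. Qed.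

Lemma meet_join_zero (a : L) (S : L -> Prop) :
  (forall s, S s -> fmeet a s = bot) -> fmeet a (fjoin S) = bot.
Proof.
move=> h; rewrite fdistr; apply: le_bot; apply: fjoin_least => x [s Ss ->].
by rewrite h //; exact: fle_refl.
Qed.

Lemma pc_intro (a b : L) : fmeet b a = bot -> le b (pcompl a).
Proof. move=> h; exact: fjoin_ub. Qed.

Lemma meet_pc (a : L) : fmeet a (pcompl a) = bot.
Proof. by apply: meet_join_zero => s hs; rewrite meet_comm. Qed.

Lemma pc_elim (a b : L) : le b (pcompl a) -> fmeet b a = bot.
Proof.
move=> h; apply: le_bot; rewrite -(meet_pc a) meet_comm.
apply: meet_mono => //; exact: fle_refl.
Qed.

Lemma pc_anti (a b : L) : le a b -> le (pcompl b) (pcompl a).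
Proof.
move=> h; apply: pc_intro; apply: le_bot; rewrite -(meet_pc b) meet_comm.
apply: meet_mono => //; exact: fle_refl.
Qed.

Lemma meet_le_pc (x y : L) : le x y -> fmeet x (pcompl y) = bot.
Proof.
move=> h; apply: le_bot; rewrite -(meet_pc y); apply: meet_mono => //; exact: fle_refl.
Qed.

Lemma join2_le (x y z : L) : le x z -> le y z -> le (fjoin2 x y) z.
Proof. by move=> h1 h2; apply: fjoin_least => w [->|->]. Qed.

Lemma le_join2_l (x y : L) : le x (fjoin2 x y).
Proof. apply: fjoin_ub; by left. Qed.
Lemma le_join2_r (x y : L) : le y (fjoin2 x y).
Proof. apply: fjoin_ub; by right. Qed.

Lemma join2C (x y : L) : fjoin2 x y = fjoin2 y x.
Proof. apply: le_antis; apply: join2_le; (exact: le_join2_l || exact: le_join2_r). Qed.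

Lemma top_le (x y z : L) : fjoin2 x y = top -> fmeet z x = bot -> le z y.
Proof.
move=> ht hz; rewrite -(meet_top z) -ht fdistr.
apply: fjoin_least => w [s [->|->] ->].
  rewrite hz; exact: fbot_min.
exact: fmeet_lb_r.
Qed.

Lemma top_pc (x y : L) : fjoin2 x y = top -> le (pcompl x) y.
Proof. move=> h; apply: top_le h _; by rewrite meet_comm meet_pc. Qed.

Lemma rb_le (a b : L) : rather_below a b -> le a b.
Proof.
move=> h; apply: top_le h _; exact: meet_pc.
Qed.

Lemma pc_bot : pcompl bot = top.
Proof. apply: le_antis; first exact: ftop_max. apply: pc_intro.
apply: le_bot; exact: fmeet_lb_r. Qed.

Lemma rb_bot (x : L) : rather_below bot x.
Proof. rewrite /rather_below pc_bot; apply: le_antis; first exact: ftop_max.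
exact: le_join2_l. Qed.

Lemma join_gt (F : rat -> L) (r : rat) :
  fjoin (fun x => exists2 q, r < q & x = F q) =
  fjoin (fun x => exists2 s, r < s & x = fjoin (fun y => exists2 q, s < q & y = F q)).
Proof.
apply: le_antis; apply: fjoin_least => x [q hq ->].
  have [m [h1 h2]] := mid_btw hq.
  apply: (fle_trans (b := fjoin (fun y => exists2 q0, m < q0 & y = F q0))).
    apply: fjoin_ub; by exists q.
  apply: fjoin_ub; by exists m.
apply: fjoin_least => y [q' hq' ->]; apply: fjoin_ub; exists q' => //.
exact: lt_trans hq'.
Qed.

Lemma join_lt (F : rat -> L) (r : rat) :
  fjoin (fun x => exists2 q, q < r & x = F q) =
  fjoin (fun x => exists2 s, s < r & x = fjoin (fun y => exists2 q, q < s & y = F q)).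
Proof.
apply: le_antis; apply: fjoin_least => x [q hq ->].
  have [m [h1 h2]] := mid_btw hq.
  apply: (fle_trans (b := fjoin (fun y => exists2 q0, q0 < m & y = F q0))).
    apply: fjoin_ub; by exists q.
  apply: fjoin_ub; by exists m.
apply: fjoin_least => y [q' hq' ->]; apply: fjoin_ub; exists q' => //.
exact: lt_trans hq.
Qed.

Definition sclo (E : rat -> L) t := fjoin (fun x => exists2 q, t < q & x = E q).
Definition scup (E : rat -> L) t := fjoin (fun x => exists2 p, p < t & x = pcompl (E p)).

Section Scale.
Variable E : rat -> L.
Hypothesis hE : forall p q : rat, p < q -> rather_below (E q) (E p).

Lemma sc_r1 r s : s <= r -> fmeet (sclo E r) (scup E s) = bot.
Proof.
move=> hsr; apply: meet_join_zero => x [p hp ->]; rewrite meet_comm.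
apply: meet_join_zero => y [q hq ->]; rewrite meet_comm.
apply: meet_le_pc; apply: rb_le; apply: hE.
exact: lt_le_trans hp (ltW (le_lt_trans hsr hq)).
Qed.

Definition mkC : ICbar L :=
  @MkICbar L (sclo E) (scup E) sc_r1 (fun r => join_gt E r)
    (fun s => join_lt (fun p => pcompl (E p)) s).

Lemma mkC_C : inCbar mkC.
Proof.
move=> r s hrs /=.
have [p [hrp hps]] := mid_btw hrs.
have [q [hrq hqp]] := mid_btw hrp.
have ht := hE _ _ hqp.
apply: le_antis; first exact: ftop_max.
rewrite -ht; apply: join2_le.
  apply: (fle_trans (b := scup E s)); last exact: le_join2_r.
  apply: fjoin_ub; by exists p.
apply: (fle_trans (b := sclo E r)); last exact: le_join2_l.
apply: fjoin_ub; by exists q.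
Qed.
End Scale.

Lemma lo_anti (h : ICbar L) t s : t < s -> le (lo h s) (lo h t).
Proof. move=> hts; rewrite (ic_r3 h t); apply: fjoin_ub; by exists s. Qed.

Lemma ury (h : ICbar L) r s a : r < s -> completely_below a (lo h s) ->
  exists c, inCbar c /\ ICle c h /\ le a (lo c r).
Proof.
move=> hrs [cc [c0 [c1 hc]]].
have [m [hrm hms]] := mid_btw hrs.
pose E := fun t => if t < m then cc (psi m t) else bot.
have hE : forall p q : rat, p < q -> rather_below (E q) (E p).
  move=> p q hpq; rewrite /E; case: ifP => hq; last exact: rb_bot.
  have hp : p < m by exact: lt_trans hpq hq.
  rewrite hp; have [q0 q1] := psi_bounds hq; have [p0 p1] := psi_bounds hp.
  apply: hc; [exact: ltW | exact: psi_mono hpq hq | exact: ltW].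
have Eup : forall t, t < m -> le (E t) (lo h s).
  move=> t ht; rewrite /E ht -c1; have [t0 t1] := psi_bounds ht.
  apply: rb_le; apply: hc => //; exact: ltW.
have Elo : forall t, t < m -> le a (E t).
  move=> t ht; rewrite /E ht -c0; have [t0 t1] := psi_bounds ht.
  apply: rb_le; apply: hc => //; exact: ltW.
exists (@mkC E hE); split; first exact: mkC_C.
split; first split.
- move=> t /=; apply: fjoin_least => x [q hq ->].
  case: (boolP (q < m)) => hqm.
    apply: (fle_trans (Eup _ hqm)); apply: lo_anti.
    exact: lt_trans hq (lt_trans hqm hms).
  rewrite /E (negbTE hqm); exact: fbot_min.
- move=> t /=; have [hmt|htm] := ltP m t.
    apply: (fle_trans (ftop_max _)); rewrite -pc_bot; apply: fjoin_ub.
    by exists m => //; rewrite /E ltxx.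
  have hp : t - 1 < m by apply: lt_le_trans htm; lra.
  apply: (fle_trans (b := pcompl (lo h s))).
    apply: pc_intro; rewrite meet_comm; apply: ic_r1.
    exact: le_trans htm (ltW hms).
  apply: (fle_trans (b := pcompl (E (t - 1)))); first exact: pc_anti (Eup _ hp).
  apply: fjoin_ub; exists (t - 1) => //; lra.
- have [q [hrq hqm]] := mid_btw hrm.
  apply: (fle_trans (Elo _ hqm)); apply: fjoin_ub; by exists q.
Qed.

Lemma ICle_trans (f g k : ICbar L) : ICle f g -> ICle g k -> ICle f k.
Proof.
move=> [h1 h2] [h3 h4]; split => r; [exact: fle_trans (h1 r) (h3 r)|exact: fle_trans (h4 r) (h2 r)].
Qed.

Lemma C_H (f : ICbar L) : inCbar f -> inHbar f.
Proof.
move=> h r s hrs; have ht := h r s hrs; split; first exact: top_pc.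
apply: top_pc; by rewrite join2C.
Qed.

Lemma join_dense (HL : completely_regular L) (h : ICbar L) : inHbar h ->
  is_lub_in (@ICle L) (@inHbar L) (fun y => inCbar y /\ ICle y h) h.
Proof.
move=> Hh; split => //; split; first by move=> y [].
move=> z Hz hub.
have hlo : forall r, le (lo h r) (lo z r).
  move=> r; rewrite (ic_r3 h r); apply: fjoin_least => x [s hrs ->].
  rewrite (HL (lo h s)); apply: fjoin_least => a ha.
  have [c [Cc [chh hac]]] := ury h r s a hrs ha.
  have [hl _] := hub c (conj Cc chh); exact: fle_trans hac (hl r).
split => // s; rewrite (ic_r4 z s); apply: fjoin_least => x [t hts ->].
apply: (fle_trans (b := pcompl (lo z t))).
  apply: pc_intro; rewrite meet_comm; apply: ic_r1; exact: lexx.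
apply: (fle_trans (b := pcompl (lo h t))); first exact: pc_anti (hlo t).
exact: (proj1 (Hh t s hts)).
Qed.

Section Lub.
Variable S : ICbar L -> Prop.
Hypothesis HS : forall f, S f -> inHbar f.

Definition aa t := fjoin (fun x => exists2 f, S f & x = lo f t).
Definition gup s := fjoin (fun x => exists2 t, t < s & x = pcompl (aa t)).
Definition glo r := fjoin (fun x => exists2 s, r < s & x = pcompl (gup s)).

Lemma aa_anti t t' : t < t' -> le (aa t') (aa t).
Proof.
move=> htt; apply: fjoin_least => x [f Sf ->].
apply: (fle_trans (lo_anti f t t' htt)); apply: fjoin_ub; by exists f.
Qed.

Lemma gup_mono s s' : s <= s' -> le (gup s) (gup s').
Proof.
move=> hss; apply: fjoin_least => x [t ht ->]; apply: fjoin_ub; exists t => //.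
exact: lt_le_trans ht hss.
Qed.

Lemma g_r1 r s : s <= r -> fmeet (glo r) (gup s) = bot.
Proof.
move=> hsr; rewrite meet_comm; apply: meet_join_zero => x [s' hs' ->].
apply: meet_le_pc; apply: gup_mono; exact: le_trans hsr (ltW hs').
Qed.

Definition gg : ICbar L :=
  @MkICbar L glo gup g_r1 (fun r => join_gt (fun s => pcompl (gup s)) r)
    (fun s => join_lt (fun t => pcompl (aa t)) s).

Lemma key s' t : s' < t -> le (aa t) (pcompl (gup s')).
Proof.
move=> hst; apply: pc_intro; apply: meet_join_zero => x [t0 ht0 ->].
apply: meet_le_pc; apply: aa_anti; exact: lt_trans ht0 hst.
Qed.

Lemma gg_H : inHbar gg.
Proof.
move=> r s hrs /=; split; last by apply: fjoin_ub; exists s.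
have [t [hrt hts]] := mid_btw hrs.
have [s' [hrs' hs't]] := mid_btw hrt.
apply: (fle_trans (b := pcompl (aa t))); last by apply: fjoin_ub; exists t.
apply: pc_anti; apply: (fle_trans (key s' t hs't)); apply: fjoin_ub; by exists s'.
Qed.

Lemma gg_lub : is_lub_in (@ICle L) (@inHbar L) S gg.
Proof.
split; first exact: gg_H.
split.
  move=> f Sf; split => r /=.
    rewrite (ic_r3 f r); apply: fjoin_least => x [r' hr' ->].
    have [s' [h1 h2]] := mid_btw hr'.
    apply: (fle_trans (b := aa r')); first by apply: fjoin_ub; exists f.
    apply: (fle_trans (key s' r' h2)); apply: fjoin_ub; by exists s'.
  apply: fjoin_least => x [t ht ->].
  apply: (fle_trans (b := pcompl (lo f t))).
    apply: pc_anti; apply: fjoin_ub; by exists f.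
  exact: (proj1 (HS _ Sf t r ht)).
move=> z Hz hub.
have ha : forall t, le (aa t) (lo z t).
  move=> t; apply: fjoin_least => x [f Sf ->]; exact: (proj1 (hub f Sf) t).
have hu : forall s, le (up z s) (gup s).
  move=> s; rewrite (ic_r4 z s); apply: fjoin_least => x [t ht ->].
  apply: (fle_trans (b := pcompl (lo z t))).
    apply: pc_intro; rewrite meet_comm; apply: ic_r1; exact: lexx.
  apply: (fle_trans (b := pcompl (aa t))); first exact: pc_anti (ha t).
  apply: fjoin_ub; by exists t.
split => r /=; last exact: hu.
apply: fjoin_least => x [s hs ->].
apply: (fle_trans (b := pcompl (up z s))); first exact: pc_anti (hu s).
exact: (proj2 (Hz r s hs)).
Qed.
End Lub.

Lemma n_r1 (f : ICbar L) r s : s <= r -> fmeet (up f (-r)) (lo f (-s)) = bot.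
Proof. move=> h; rewrite meet_comm; apply: ic_r1; rewrite lerN2. exact: h. Qed.

Lemma n_r3 (f : ICbar L) r :
  up f (-r) = fjoin (fun x => exists2 s, r < s & x = up f (-s)).
Proof.
rewrite {1}(ic_r4 f (-r)); apply: le_antis; apply: fjoin_least => x [t ht ->];
  apply: fjoin_ub.
  by exists (-t); [lra | rewrite opprK].
by exists (-t) => //; lra.
Qed.

Lemma n_r4 (f : ICbar L) s :
  lo f (-s) = fjoin (fun x => exists2 r, r < s & x = lo f (-r)).
Proof.
rewrite {1}(ic_r3 f (-s)); apply: le_antis; apply: fjoin_least => x [t ht ->];
  apply: fjoin_ub.
  by exists (-t); [lra | rewrite opprK].
by exists (-t) => //; lra.
Qed.

Definition neg (f : ICbar L) : ICbar L :=
  @MkICbar L (fun r => up f (-r)) (fun s => lo f (-s)) (n_r1 f) (n_r3 f) (n_r4 f).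

Lemma neg_le f g : ICle f g -> ICle (neg g) (neg f).
Proof. move=> [h1 h2]; split => r /=; [exact: h2 | exact: h1]. Qed.

Lemma nn1 f : ICle f (neg (neg f)).
Proof. split => r /=; rewrite opprK; exact: fle_refl. Qed.

Lemma nn2 f : ICle (neg (neg f)) f.
Proof. split => r /=; rewrite opprK; exact: fle_refl. Qed.

Lemma neg_C f : inCbar f -> inCbar (neg f).
Proof. move=> h r s hrs /=; rewrite join2C; apply: h; lra. Qed.

Lemma neg_H f : inHbar f -> inHbar (neg f).
Proof.
move=> h r s hrs /=; have [|h1 h2] := h (-s) (-r); first lra.
by split.
Qed.

Arguments ICle_trans {f g k}.
Arguments neg_le {f g}.

Lemma meet_dense (HL : completely_regular L) (h : ICbar L) : inHbar h ->
  is_glb_in (@ICle L) (@inHbar L) (fun y => inCbar y /\ ICle h y) h.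
Proof.
move=> Hh; split => //; split; first by move=> y [].
move=> z Hz hlb.
have [_ [_ hl]] := join_dense HL (neg h) (neg_H h Hh).
have : ICle (neg h) (neg z).
  apply: hl; first exact: neg_H z Hz.
  move=> y [Cy hy].
  have hz : ICle z (neg y).
    apply: hlb; split; first exact: neg_C y Cy.
    exact: ICle_trans (nn1 h) (neg_le hy).
  exact: ICle_trans (nn1 y) (neg_le hz).
move=> /neg_le hzz; exact: ICle_trans (nn1 z) (ICle_trans hzz (nn2 h)).
Qed.

End Aux.

Theorem proposition3p7 (L : frame) (HL : completely_regular L) :
  is_DM_completion (@ICle L) (@inCbar L) (@inHbar L).
Proof.
split; first exact: C_H.
split; first by move=> S HS; exists (@gg L S); exact: gg_lub.
split => x Hx; [exact: join_dense | exact: meet_dense].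
Qed.
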